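(* Let $n\ge 2$, $0\le m\le n$ and $k$ generic. Among linear combinations of the currents $A_j$, $Q_\pm$, $Y$ (i.e. dimension-one fields of zero momentum in $\mathcal{V}_\xi$), those commuting with all screenings of the $n[m]$ realization form a one-dimensional space, spanned by $$\mathcal{H}^{(k)}_{n[m]}(z)=\ell_n(k)Y(z)+\sum_{i=1}^{n-m-1}\frac{n-i-m}{n}A_i(z)+\frac{n-m}{n}Q_+(z)-\sum_{i=-m+1}^{-1}\frac{m+i}{n}A_i(z)-\frac{m}{n}Q_-(z),$$ which satisfies $\mathcal{H}^{(k)}_{n[m]}(z)\mathcal{H}^{(k)}_{n[m]}(w)\sim \ell_n(k)(z-w)^{-2}$, where $\ell_n(k)=\frac{n-1}{n}k+n-2$.
   Context: Setup. Fix integers $n\ge 2$ and $0\le m\le n$, a generic complex number $k$ (in particular $k\neq -n$), and put $K=k+n$. Let $\varphi=(\varphi_1,\dots,\varphi_{n+1})$ be free scalar fields with OPE $\partial\varphi_i(z)\partial\varphi_j(w)\sim\delta_{ij}(z-w)^{-2}$, and let $(\,,\,)$ be the standard symmetric bilinear form on $\mathbb{C}^{n+1}$. Choose vectors $a_i$ ($1\le i\le n-m-1$), $a_{-i}$ ($1\le i\le m-1$), $\psi_+$ (present iff $m\le n-1$), $\psi_-$ (present iff $m\ge 1$), and $\xi$ in $\mathbb{C}^{n+1}$ whose nonzero pairwise products are: $(a_j,a_j)=2K$ for every $a_j$ present; $(a_i,a_{i+1})=-K$ for $1\le i\le n-m-2$; $(a_{-i},a_{-i-1})=-K$ for $1\le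 i\le m-2$; $(a_1,\psi_+)=-K$; $(a_{-1},\psi_-)=-K$; $(\psi_\pm,\psi_\pm)=1$; $(\psi_+,\psi_-)=K-1$; $(\psi_+,\xi)=1$; $(\psi_-,\xi)=-1$; all other products (including $(\xi,\xi)$ and $(a_j,\xi)$) vanish. Define currents $A_j=(a_j,\partial\varphi)$, $Q_\pm=(\psi_\pm,\partial\varphi)$, $Y=(\xi,\partial\varphi)$ and the field $\Xi=(\xi,\varphi)$. The screening operators are $E_j=\oint e^{(a_j,\varphi)}$ for each $a_j$ present and $\Psi_\pm=\oint e^{(\psi_\pm,\varphi)}$ for each $\psi_\pm$ present. Let $\mathcal{V}_\xi$ be the space of fields $:P(\partial\varphi)e^{p\Xi}:$, $p\in\mathbb{Z}$, with $P$ a normal-ordered differential polynomial in the components of $\partial\varphi$. A field $X(w)$ commutes with a screening $\oint s(z)\,dz$ if the residue at $z=w$ of the OPE $s(z)X(w)$ vanishes. Terms involving absent vectors (e.g. $Q_-$ when $m=0$) are omitted. *)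

(* Defs.v *)
From HB Require Import structures.
From mathcomp Require Import all_boot all_algebra.
From mathcomp Require Import reals Rstruct complex.
Unset Printing Implicit Defensive.
Import GRing.Theory.
Local Open Scope ring_scope.

Definition C : numClosedFieldType := complex Rdefinitions.R.

(* Labels of the vectors of the n[m] realization:
   VA i = a_i (i>=1), VB i = a_{-i} (i>=1), VP = psi_+, VM = psi_-, VX = xi. *)
Inductive vlabel := VA of nat | VB of nat | VP | VM | VX.

Definition vlabel_eqb (x y : vlabel) : bool :=
  match x, y with
  | VA i, VA j => i == j
  | VB i, VB j => i == j
  | VP, VP | VM, VM | VX, VX => true
  | _, _ => false
  end.

Lemma vlabel_eqP : Equality.axiom vlabel_eqb.
Proof.
case=> [i|i|||] [j|j|||] /=; try (by constructor);
  by apply: (iffP eqP); [move=> -> | case].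
Qed.

HB.instance Definition _ := hasDecEq.Build vlabel vlabel_eqP.

Definition labels (n m : nat) : seq vlabel :=
  [seq VA i | i <- iota 1 (n - m - 1)] ++
  [seq VB i | i <- iota 1 (m - 1)] ++
  (if (m < n)%N then [:: VP] else [::]) ++
  (if (0 < m)%N then [:: VM] else [::]) ++ [:: VX].

(* The prescribed Gram matrix (K = k + n); only used on present labels. *)
Definition gram (K : C) (x y : vlabel) : C :=
  match x, y with
  | VA i, VA j => if i == j then 2 * K
                  else if (i.+1 == j) || (j.+1 == i) then - K else 0
  | VB i, VB j => if i == j then 2 * K
                  else if (i.+1 == j) || (j.+1 == i) then - K else 0
  | VA i, VP | VP, VA i => if i == 1%N then - K else 0
  | VB i, VM | VM, VB i => if i == 1%N then - K else 0
  | VP, VP => 1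
  | VM, VM => 1
  | VP, VM | VM, VP => K - 1
  | VP, VX | VX, VP => 1
  | VM, VX | VX, VM => -1
  | _, _ => 0
  end.

Definition bform {N : nat} (u w : 'rV[C]_N) : C := (u *m w^T) 0 0.

Definition realizes (n m : nat) (K : C) (v : vlabel -> 'rV[C]_(n.+1)) : Prop :=
  forall x y, x \in labels n m -> y \in labels n m -> bform (v x) (v y) = gram K x y.

(* Fields of V_xi of dimension one and zero momentum that are linear
   combinations of the currents: a current (u, d phi) is represented by u. *)
Definition lin_comb_currents (n m : nat) (v : vlabel -> 'rV[C]_(n.+1))
  (u : 'rV[C]_(n.+1)) : Prop :=
  exists c : vlabel -> C, u = \sum_(x <- labels n m) c x *: v x.

(* Free-field OPE (Wick): e^{(s,phi)}(z) (u,d phi)(w) ~ -(s,u)/(z-w) e^{(s,phi)}(w),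
   so the residue at z = w is -(s,u) e^{(s,phi)}(w); since e^{(s,phi)} is a
   nonzero field, the current commutes with the screening iff this
   coefficient vanishes. *)
Definition screening_residue_coef {N : nat} (s u : 'rV[C]_N) : C := - bform s u.

Definition commutes_with_screening {N : nat} (s u : 'rV[C]_N) : Prop :=
  screening_residue_coef s u = 0.

(* (u,d phi)(z) (w,d phi)(w') ~ (u,w) (z-w')^{-2}: the coefficient of the
   double pole in the OPE of two currents. *)
Definition ope_double_pole {N : nat} (u w : 'rV[C]_N) : C := bform u w.

Definition ell (n : nat) (k : C) : C := (n%:R - 1) / n%:R * k + n%:R - 2.

Definition Hvec (n m : nat) (k : C) (v : vlabel -> 'rV[C]_(n.+1)) : 'rV[C]_(n.+1) :=
  ell n k *: v VX
  + \sum_(i <- iota 1 (n - m - 1)) ((n%:R - i%:R - m%:R) / n%:R) *: v (VA i)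
  + ((n%:R - m%:R) / n%:R) *: v VP
  - \sum_(i <- iota 1 (m - 1)) ((m%:R - i%:R) / n%:R) *: v (VB i)
  - (m%:R / n%:R) *: v VM.

(* Main.v *)
Require Import Defs.
From HB Require Import structures.
From mathcomp Require Import all_boot all_algebra.
From mathcomp Require Import reals Rstruct complex.
From mathcomp Require Import zify ring.
Import GRing.Theory Num.Theory.
Local Open Scope ring_scope.


Lemma bform_sumr N (u : 'rV[C]_N) (s : seq vlabel) (c : vlabel -> C)
  (w : vlabel -> 'rV[C]_N) :
  bform u (\sum_(x <- s) c x *: w x) = \sum_(x <- s) c x * bform u (w x).
Proof.
rewrite /bform; elim: s => [|x s IH]; rewrite ?big_nil ?big_cons.
  by rewrite trmx0 mulmx0 mxE.
by rewrite -IH linearD /= linearZ /= mulmxDr -scalemxAr !mxE.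
Qed.

Lemma bformZr N (u w : 'rV[C]_N) a : bform u (a *: w) = a * bform u w.
Proof. by rewrite /bform linearZ /= -scalemxAr mxE. Qed.

Lemma bform_sym N (u w : 'rV[C]_N) : bform u w = bform w u.
Proof. by rewrite /bform -[u *m w^T]trmxK trmx_mul trmxK mxE. Qed.

Lemma bform0 N (u : 'rV[C]_N) : bform 0 u = 0.
Proof. by rewrite /bform mul0mx mxE. Qed.

Lemma sumL (V : zmodType) n m (F : vlabel -> V) :
  (~~ (m < n)%N -> F VP = 0) -> (~~ (0 < m)%N -> F VM = 0) ->
  \sum_(x <- labels n m) F x = \sum_(j <- iota 1 (n-m-1)) F (VA j)
     + \sum_(j <- iota 1 (m-1)) F (VB j) + F VP + F VM + F VX.
Proof.
move=> HP HM; rewrite /labels !big_cat !big_map /=.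
case: ifP => h1; case: ifP => h2; rewrite ?big_cons ?big_nil /= ?addr0 ?addrA.
- by [].
- by rewrite (HM (negbT h2)) addr0.
- by rewrite (HP (negbT h1)) addr0.
- by rewrite (HP (negbT h1)) (HM (negbT h2)) !addr0.
Qed.

Lemma VA_inj : injective VA. Proof. by move=> a b []. Qed.
Lemma VB_inj : injective VB. Proof. by move=> a b []. Qed.

Lemma memA n m j : (VA j \in labels n m) = (j \in iota 1 (n-m-1)).
Proof.
rewrite /labels !mem_cat (mem_map VA_inj).
have -> : (VA j \in [seq VB i | i <- iota 1 (m - 1)]) = false.
  by apply/negbTE/mapP => -[].
by case: ifP; case: ifP; rewrite ?inE ?orbF.
Qed.

Lemma memB n m j : (VB j \in labels n m) = (j \in iota 1 (m-1)).
Proof.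
rewrite /labels !mem_cat (mem_map VB_inj).
have -> : (VB j \in [seq VA i | i <- iota 1 (n - m - 1)]) = false.
  by apply/negbTE/mapP => -[].
by case: ifP; case: ifP; rewrite ?inE ?orbF.
Qed.

Lemma memP n m : (VP \in labels n m) = (m < n)%N.
Proof.
rewrite /labels !mem_cat.
have -> : (VP \in [seq VA i | i <- iota 1 (n - m - 1)]) = false.
  by apply/negbTE/mapP => -[].
have -> : (VP \in [seq VB i | i <- iota 1 (m - 1)]) = false.
  by apply/negbTE/mapP => -[].
by case: ifP; case: ifP; rewrite ?inE ?orbF.
Qed.

Lemma memM n m : (VM \in labels n m) = (0 < m)%N.
Proof.
rewrite /labels !mem_cat.
have -> : (VM \in [seq VA i | i <- iota 1 (n - m - 1)]) = false.
  by apply/negbTE/mapP => -[].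
have -> : (VM \in [seq VB i | i <- iota 1 (m - 1)]) = false.
  by apply/negbTE/mapP => -[].
by case: ifP; case: ifP; rewrite ?inE ?orbF.
Qed.

Lemma memX n m : VX \in labels n m.
Proof. by rewrite /labels !mem_cat !inE eqxx !orbT. Qed.

Lemma sum_pick0 (s : seq nat) (a : nat) (F : nat -> C) : uniq s ->
  \sum_(j <- s) (if j == a then F j else 0) = if a \in s then F a else 0.
Proof.
elim: s => [|x s IH]; first by rewrite big_nil.
rewrite /= big_cons inE => /andP[xs us]; rewrite IH //.
have [<-|ne] := eqVneq x a; first by rewrite (negbTE xs) addr0.
by rewrite add0r.
Qed.

Lemma sum_pick (s : seq nat) (a : nat) (F : nat -> C) : uniq s ->
  (a \notin s -> F a = 0) ->
  \sum_(j <- s) (if j == a then F j else 0) = F a.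
Proof.
move=> us Ha; rewrite sum_pick0 //; case: ifP => // /negbT; by move/Ha.
Qed.

Lemma chain_split (K x : C) (i j : nat) : (1 <= i)%N ->
  x * (if i == j then 2 * K else if (i.+1 == j) || (j.+1 == i) then - K else 0)
  = (if j == i then 2 * K * x else 0) + (if j == i.+1 then - K * x else 0)
    + (if j == i.-1 then - K * x else 0).
Proof.
move=> i1.
have [->|ne] := eqVneq j i.
  rewrite !ifF; [by rewrite !addr0 mulrC| lia | lia].
have [->|ne2] := eqVneq j i.+1.
  rewrite ifF; last by lia.
  by rewrite /= add0r addr0 mulrC.
have [->|ne3] := eqVneq j i.-1.
  rewrite ifT; last by lia.
  by rewrite /= !add0r mulrC.
rewrite ifF; last by lia.
by rewrite mulr0 !addr0.
Qed.


Definition cleaned n m (d : vlabel -> C) := forall x, x \notin labels n m -> d x = 0.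
Definition grow n m K (d : vlabel -> C) y := \sum_(x <- labels n m) d x * gram K y x.

Lemma sum_mul0 (s : seq nat) (f : nat -> C) : \sum_(j <- s) f j * 0 = 0.
Proof. by rewrite big1 // => *; rewrite mulr0. Qed.

Lemma growE n m K d y : cleaned n m d ->
  grow n m K d y = \sum_(j <- iota 1 (n-m-1)) d (VA j) * gram K y (VA j)
     + \sum_(j <- iota 1 (m-1)) d (VB j) * gram K y (VB j)
     + d VP * gram K y VP + d VM * gram K y VM + d VX * gram K y VX.
Proof.
move=> cl; rewrite /grow sumL //.
  by move=> h; rewrite cl ?memP // mul0r.
by move=> h; rewrite cl ?memM // mul0r.
Qed.

Lemma growX n m K d : cleaned n m d -> grow n m K d VX = d VP - d VM.
Proof.
move=> cl; rewrite growE //= !sum_mul0 ?mulr0 ?mulr1 ?mulrN1 ?add0r ?addr0 //.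
Qed.

Lemma growP n m K d : cleaned n m d ->
  grow n m K d VP = - K * d (VA 1) + d VP + (K - 1) * d VM + d VX.
Proof.
move=> cl; rewrite growE //= sum_mul0 addr0.
rewrite (eq_bigr (fun j => if j == 1%N then - K * d (VA j) else 0)); last first.
  by move=> j _; case: ifP; rewrite ?mulr0 // mulrC.
rewrite sum_pick ?iota_uniq //; last by move=> h; rewrite cl ?memA // mulr0.
by rewrite !mulr1 [d VM * _]mulrC.
Qed.

Lemma growM n m K d : cleaned n m d ->
  grow n m K d VM = - K * d (VB 1) + (K - 1) * d VP + d VM - d VX.
Proof.
move=> cl; rewrite growE //= sum_mul0 add0r.
rewrite (eq_bigr (fun j => if j == 1%N then - K * d (VB j) else 0)); last first.
  by move=> j _; case: ifP; rewrite ?mulr0 // mulrC.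
rewrite sum_pick ?iota_uniq //; last by move=> h; rewrite cl ?memB // mulr0.
by rewrite !mulr1 mulrN1 [d VP * _]mulrC.
Qed.

Lemma growA n m K d i : cleaned n m d -> (1 <= i <= n - m - 1)%N ->
  grow n m K d (VA i) = 2 * K * d (VA i) - K * d (VA i.+1) - K * d (VA i.-1)
     + d VP * (if i == 1%N then - K else 0).
Proof.
move=> cl /andP[i1 ip]; rewrite growE //= sum_mul0 ?mulr0 !addr0.
rewrite (eq_bigr (fun j => (if j == i then 2 * K * d (VA j) else 0)
   + (if j == i.+1 then - K * d (VA j) else 0)
   + (if j == i.-1 then - K * d (VA j) else 0))); last first.
  move=> j _; rewrite chain_split //.
rewrite !big_split /=.
rewrite !sum_pick ?iota_uniq //; try by move=> h; rewrite cl ?memA // mulr0.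
by rewrite !mulNr.
Qed.

Lemma growB n m K d i : cleaned n m d -> (1 <= i <= m - 1)%N ->
  grow n m K d (VB i) = 2 * K * d (VB i) - K * d (VB i.+1) - K * d (VB i.-1)
     + d VM * (if i == 1%N then - K else 0).
Proof.
move=> cl /andP[i1 ip]; rewrite growE //= sum_mul0 ?mulr0 add0r !addr0.
rewrite (eq_bigr (fun j => (if j == i then 2 * K * d (VB j) else 0)
   + (if j == i.+1 then - K * d (VB j) else 0)
   + (if j == i.-1 then - K * d (VB j) else 0))); last first.
  move=> j _; rewrite chain_split //.
rewrite !big_split /=.
rewrite !sum_pick ?iota_uniq //; try by move=> h; rewrite cl ?memB // mulr0.
by rewrite !mulNr.
Qed.


Lemma eq_from (x y e : C) : e = 0 -> x - y = e -> x = y.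
Proof. by move=> -> /eqP; rewrite subr_eq0 => /eqP. Qed.

Lemma eq_fromK (K x y e : C) : K != 0 -> e = 0 -> K * (y - x) = e -> x = y.
Proof.
move=> K0 -> /eqP; rewrite mulf_eq0 (negbTE K0) /= subr_eq0 => /eqP //.
Qed.

Arguments eq_from {x y e}.
Arguments eq_fromK {K x y e}.

Lemma chain_lin (a : nat -> C) p :
  (forall i, (1 <= i <= p)%N -> a i.+1 = 2 * a i - a i.-1) ->
  forall i, (i <= p.+1)%N -> a i = a 0%N + i%:R * (a 1%N - a 0%N).
Proof.
move=> rec.
have key : forall i, (i.+1 <= p.+1)%N ->
   a i = a 0%N + i%:R * (a 1%N - a 0%N) /\ a i.+1 = a 0%N + i.+1%:R * (a 1%N - a 0%N).
  elim=> [|i IH] hi.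
    by split; rewrite ?mul0r ?addr0 // mul1r addrC subrK.
  have [h1 h2] := IH (ltnW hi).
  split => //.
  rewrite rec; last by lia.
  rewrite /= h2 h1 -[(i.+2)%:R]natr1 -[(i.+1)%:R]natr1; ring.
case=> [|i] hi; first by rewrite mul0r addr0.
by have [] := key i hi.
Qed.

Lemma chainA n m K d : K != 0 -> cleaned n m d ->
  (forall y, y \in labels n m -> grow n m K d y = 0) ->
  ((n - m - 1).+1)%:R * d (VA 1) = (n - m - 1)%:R * d VP /\
  forall i, (1 <= i <= n - m - 1)%N -> d (VA i) = d VP + i%:R * (d (VA 1) - d VP).
Proof.
move=> K0 cl Hr.
set p := (n - m - 1)%N.
pose a j := if j == 0%N then d VP else d (VA j).
have dA0 : d (VA 0) = 0 by rewrite cl // memA mem_iota.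
have rec : forall i, (1 <= i <= p)%N -> a i.+1 = 2 * a i - a i.-1.
  move=> i hi.
  have := Hr (VA i); rewrite memA mem_iota => /(_ ltac:(lia)).
  rewrite (@growA n m K d i cl hi).
  rewrite /a /=; case: (i =P 0%N) => [i0|_]; first by lia.
  case: (i =P 1%N) => [->|i1] /= E.
    by apply: (eq_fromK K0 E); rewrite dA0; ring.
  rewrite ifF; last by apply/eqP; lia.
  by apply: (eq_fromK K0 E); ring.
have hA := @chain_lin a p rec.
have ap1 : a p.+1 = 0 by rewrite /a /= cl // memA mem_iota; lia.
split.
  have := hA p.+1 (leqnn _); rewrite ap1 /a /= => E.
  apply: (eq_from (esym E)); rewrite -[(p.+1)%:R]natr1; ring.
move=> i hi; have := hA i (leqW (andP hi).2); rewrite /a /=.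
by case: (i =P 0%N) => [|_]; [lia|].
Qed.

Lemma chainB n m K d : K != 0 -> cleaned n m d ->
  (forall y, y \in labels n m -> grow n m K d y = 0) ->
  ((m - 1).+1)%:R * d (VB 1) = (m - 1)%:R * d VM /\
  forall i, (1 <= i <= m - 1)%N -> d (VB i) = d VM + i%:R * (d (VB 1) - d VM).
Proof.
move=> K0 cl Hr.
set p := (m - 1)%N.
pose a j := if j == 0%N then d VM else d (VB j).
have dA0 : d (VB 0) = 0 by rewrite cl // memB mem_iota.
have rec : forall i, (1 <= i <= p)%N -> a i.+1 = 2 * a i - a i.-1.
  move=> i hi.
  have := Hr (VB i); rewrite memB mem_iota => /(_ ltac:(lia)).
  rewrite (@growB n m K d i cl hi).
  rewrite /a /=; case: (i =P 0%N) => [i0|_]; first by lia.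
  case: (i =P 1%N) => [->|i1] /= E.
    by apply: (eq_fromK K0 E); rewrite dA0; ring.
  rewrite ifF; last by apply/eqP; lia.
  by apply: (eq_fromK K0 E); ring.
have hA := @chain_lin a p rec.
have ap1 : a p.+1 = 0 by rewrite /a /= cl // memB mem_iota; lia.
split.
  have := hA p.+1 (leqnn _); rewrite ap1 /a /= => E.
  apply: (eq_from (esym E)); rewrite -[(p.+1)%:R]natr1; ring.
move=> i hi; have := hA i (leqW (andP hi).2); rewrite /a /=.
by case: (i =P 0%N) => [|_]; [lia|].
Qed.

Lemma nondeg n m K d : (2 <= n)%N -> (m <= n)%N -> K != 0 -> cleaned n m d ->
  (forall y, y \in labels n m -> grow n m K d y = 0) -> forall x, d x = 0.
Proof.
move=> n2 mn K0 cl Hr.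
have [eA hA] := @chainA n m K d K0 cl Hr.
have [eB hB] := @chainB n m K d K0 cl Hr.
have rX := Hr VX (memX n m); rewrite growX // in rX.
have PM : d VP = d VM by apply: (eq_from rX); ring.
have rP : (m < n)%N -> - K * d (VA 1) + d VP + (K - 1) * d VM + d VX = 0.
  by move=> h; rewrite -(@growP n m K d cl) Hr // memP.
have rM : (0 < m)%N -> - K * d (VB 1) + (K - 1) * d VP + d VM - d VX = 0.
  by move=> h; rewrite -(@growM n m K d cl) Hr // memM.
have c0 : d VP = 0.
  case: (posnP m) => [m0|m0].
    by rewrite PM cl // memM m0.
  case: (ltnP m n) => [mlt|mge]; last by rewrite cl // memP; lia.
  have E3 : d (VA 1) + d (VB 1) - 2 * d VP = 0.
    apply: (@mulfI _ (- K)); first by rewrite oppr_eq0.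
    rewrite mulr0.
    transitivity ((- K * d (VA 1) + d VP + (K - 1) * d VM + d VX)
       + (- K * d (VB 1) + (K - 1) * d VP + d VM - d VX)); first by rewrite -PM; ring.
    by rewrite rP // rM // addr0.
  have E1 : ((n - m - 1).+1)%:R * d (VA 1) - (n - m - 1)%:R * d VP = 0 by rewrite eA subrr.
  have E2 : ((m - 1).+1)%:R * d (VB 1) - (m - 1)%:R * d VP = 0 by rewrite eB PM subrr.
  set P := ((n - m - 1).+1)%:R in E1.
  set Q := ((m - 1).+1)%:R in E2.
  have E : (P + Q) * d VP = Q * (((n - m - 1).+1)%:R * d (VA 1) - (n - m - 1)%:R * d VP)
     + P * (((m - 1).+1)%:R * d (VB 1) - (m - 1)%:R * d VP)
     - P * Q * (d (VA 1) + d (VB 1) - 2 * d VP).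
    rewrite /P /Q -[((n - m - 1).+1)%:R]natr1 -[((m - 1).+1)%:R]natr1; ring.
  rewrite E1 E2 E3 !mulr0 subr0 addr0 /P /Q -natrD in E.
  move/eqP: E; rewrite mulf_eq0 pnatr_eq0 => /orP[|/eqP //]; lia.
have cM : d VM = 0 by rewrite -PM.
have a1 : d (VA 1) = 0.
  by move/eqP: eA; rewrite c0 mulr0 mulf_eq0 pnatr_eq0 /= => /eqP.
have b1 : d (VB 1) = 0.
  by move/eqP: eB; rewrite cM mulr0 mulf_eq0 pnatr_eq0 /= => /eqP.
have cX : d VX = 0.
  case: (ltnP m n) => [mlt|mge].
    by have := rP mlt; rewrite a1 c0 cM !mulr0 !add0r.
  have := rM ltac:(lia); rewrite b1 c0 cM !mulr0 !add0r => /eqP.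
  by rewrite oppr_eq0 => /eqP.
case=> [j|j|||] //.
  case: (boolP (VA j \in labels n m)) => [|h]; last by rewrite cl.
  by rewrite memA mem_iota => hj; rewrite hA ?a1 ?c0 ?subrr ?mulr0 ?addr0 //; lia.
case: (boolP (VB j \in labels n m)) => [|h]; last by rewrite cl.
by rewrite memB mem_iota => hj; rewrite hB ?b1 ?cM ?subrr ?mulr0 ?addr0 //; lia.
Qed.


Definition hc n m k x : C := match x with
  | VA i => (n%:R - i%:R - m%:R) / n%:R
  | VB i => - ((m%:R - i%:R) / n%:R)
  | VP => (n%:R - m%:R) / n%:R
  | VM => - (m%:R / n%:R)
  | VX => ell n k end.

Definition hh n m k x : C := if x \in labels n m then hc n m k x else 0.

Lemma hh_cl n m k : cleaned n m (hh n m k).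
Proof. by move=> x /negbTE h; rewrite /hh h. Qed.

Lemma hhP n m k : (m <= n)%N -> hh n m k VP = (n%:R - m%:R) / n%:R.
Proof.
move=> mn; rewrite /hh memP; case: ltnP => //= h.
have -> : m = n by lia.
by rewrite subrr mul0r.
Qed.

Lemma hhM n m k : hh n m k VM = - (m%:R / n%:R).
Proof.
rewrite /hh memM; case: posnP => //= ->.
by rewrite mul0r oppr0.
Qed.

Lemma hhX n m k : hh n m k VX = ell n k.
Proof. by rewrite /hh memX. Qed.

Lemma hhA n m k j : (m < n)%N -> (1 <= j <= n - m)%N ->
  hh n m k (VA j) = (n%:R - j%:R - m%:R) / n%:R.
Proof.
move=> mn hj; rewrite /hh memA mem_iota; case: ifP => //= h.
have -> : j = (n - m)%N by lia.
rewrite natrB; last by lia.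
ring.
Qed.

Lemma hhB n m k j : (0 < m)%N -> (1 <= j <= m)%N ->
  hh n m k (VB j) = - ((m%:R - j%:R) / n%:R).
Proof.
move=> mn hj; rewrite /hh memB mem_iota; case: ifP => //= h.
have -> : j = m by lia.
by rewrite subrr mul0r oppr0.
Qed.

Lemma hhA0 n m k : hh n m k (VA 0) = 0.
Proof. by rewrite /hh memA mem_iota. Qed.

Lemma hhB0 n m k : hh n m k (VB 0) = 0.
Proof. by rewrite /hh memB mem_iota. Qed.

Lemma n0C n : (2 <= n)%N -> (n%:R : C) != 0.
Proof. by move=> h; rewrite pnatr_eq0; lia. Qed.

Lemma Hrow n m k y : (2 <= n)%N -> (m <= n)%N -> y \in labels n m ->
  grow n m (k + n%:R) (hh n m k) y = if y == VX then 1 else 0.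
Proof.
move=> n2 mn; have nz := @n0C n n2; have cl := hh_cl n m k.
case: y => [i|i|||] /=.
- rewrite memA mem_iota => hi.
  rewrite (@growA _ _ _ _ _ cl); last by lia.
  have mlt : (m < n)%N by lia.
  case: i hi => [|j] hj; first by lia.
  rewrite /= (@hhA _ _ _ _ mlt); last by lia.
  rewrite (@hhA _ _ _ _ mlt); last by lia.
  rewrite (@hhP _ _ _ mn).
  case: j hj => [|l] hl.
    by rewrite hhA0 /=; field.
  rewrite /= (@hhA _ _ _ l.+1 mlt); last by lia.
  rewrite -[(l.+3)%:R]natr1 -[(l.+2)%:R]natr1 -[(l.+1)%:R]natr1.
  by field.
- rewrite memB mem_iota => hi.
  rewrite (@growB _ _ _ _ _ cl); last by lia.
  have mlt : (0 < m)%N by lia.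
  case: i hi => [|j] hj; first by lia.
  rewrite /= (@hhB _ _ _ _ mlt); last by lia.
  rewrite (@hhB _ _ _ _ mlt); last by lia.
  rewrite hhM.
  case: j hj => [|l] hl.
    by rewrite hhB0 /=; field.
  rewrite /= (@hhB _ _ _ _ mlt); last by lia.
  rewrite -[(l.+3)%:R]natr1 -[(l.+2)%:R]natr1 -[(l.+1)%:R]natr1.
  by field.
- rewrite memP => mlt.
  rewrite (@growP _ _ _ _ cl) (@hhA _ _ _ _ mlt); last by lia.
  rewrite (@hhP _ _ _ mn) hhM hhX /ell; by field.
- rewrite memM => mlt.
  rewrite (@growM _ _ _ _ cl) (@hhB _ _ _ _ mlt); last by lia.
  rewrite (@hhP _ _ _ mn) hhM hhX /ell; by field.
- move=> _; rewrite (@growX _ _ _ _ cl) (@hhP _ _ _ mn) hhM; by field.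
Qed.


Lemma Hvec_sum n m k v : (m <= n)%N ->
  Hvec n m k v = \sum_(x <- labels n m) hh n m k x *: v x.
Proof.
move=> mn.
rewrite sumL; last first.
- by move=> h; rewrite /hh memM (negbTE h) scale0r.
- by move=> h; rewrite /hh memP (negbTE h) scale0r.
have EA : \sum_(j <- iota 1 (n-m-1)) hh n m k (VA j) *: v (VA j)
   = \sum_(j <- iota 1 (n-m-1)) ((n%:R - j%:R - m%:R) / n%:R) *: v (VA j).
  by apply: eq_big_seq => j jin; rewrite /hh memA jin.
have EB : \sum_(j <- iota 1 (m-1)) hh n m k (VB j) *: v (VB j)
   = - \sum_(j <- iota 1 (m-1)) ((m%:R - j%:R) / n%:R) *: v (VB j).
  by rewrite -sumrN; apply: eq_big_seq => j jin; rewrite /hh memB jin /= scaleNr.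
rewrite EA EB (@hhP _ _ _ mn) hhM hhX /Hvec scaleNr.
rewrite [RHS]addrC !addrA; congr (_ - _).
by rewrite addrAC.
Qed.

Lemma bform_grow n m K v d y : realizes n m K v -> y \in labels n m ->
  bform (v y) (\sum_(x <- labels n m) d x *: v x) = grow n m K d y.
Proof.
move=> Hv yL; rewrite bform_sumr /grow.
by apply: eq_big_seq => x xL; rewrite Hv.
Qed.

Lemma grow_lin n m K (a b : vlabel -> C) l y :
  grow n m K (fun x => a x - l * b x) y = grow n m K a y - l * grow n m K b y.
Proof.
rewrite /grow mulr_sumr -sumrB; apply: eq_bigr => x _; ring.
Qed.

Theorem lemma2p1 (n m : nat) (Hn : (2 <= n)%N) (Hm : (m <= n)%N) :
  exists S : seq C, forall k : C, k + n%:R != 0 -> k \notin S ->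
  forall v : vlabel -> 'rV[C]_(n.+1), realizes n m (k + n%:R) v ->
    [/\ Hvec n m k v != 0,
        lin_comb_currents n m v (Hvec n m k v),
        (forall u, lin_comb_currents n m v u ->
           ((forall x, x \in labels n m -> x != VX ->
                commutes_with_screening (v x) u)
            <-> exists a : C, u = a *: Hvec n m k v))
      & ope_double_pole (Hvec n m k v) (Hvec n m k v) = ell n k].
Proof.
set k0 : C := - ((n%:R - 2) * n%:R / (n%:R - 1)).
exists [:: k0] => k HK Hk v Hv.
have nz := @n0C n Hn.
have n1 : (n%:R - 1 : C) != 0.
  rewrite -{1}(prednK (ltnW Hn)) -natr1 addrK pnatr_eq0; lia.
have HH := @Hvec_sum n m k v Hm.
have Hb : forall y, y \in labels n m ->
    bform (v y) (Hvec n m k v) = if y == VX then 1 else 0.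
  by move=> y yL; rewrite HH (@bform_grow _ _ _ _ _ _ Hv yL) Hrow.
have Hope : bform (Hvec n m k v) (Hvec n m k v) = ell n k.
  rewrite {2}HH bform_sumr.
  rewrite (eq_big_seq (fun x => hh n m k x * (if x == VX then 1 else 0))); last first.
    by move=> x xL; rewrite bform_sym Hb.
  rewrite sumL ?mulr0 //= !big1 ?mulr1 ?hhX ?add0r ?addr0 //; by move=> *; rewrite mulr0.
have ell0 : ell n k != 0.
  apply/eqP => E; move: Hk; rewrite inE => /eqP; apply.
  have E2 : ell n k = (n%:R - 1) / n%:R * (k - k0) by rewrite /ell /k0; field; rewrite n1 nz.
  move: E; rewrite E2 => /eqP; rewrite mulf_eq0 mulf_eq0 invr_eq0 (negbTE n1) (negbTE nz) /=.
  by rewrite subr_eq0 => /eqP.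
split.
- apply/eqP => H0; move: Hope; rewrite H0 /bform mul0mx mxE => /esym /eqP.
  by rewrite (negbTE ell0).
- by exists (hh n m k).
- move=> u [c ->]; split.
  + move=> Hc.
    pose c' x := if x \in labels n m then c x else 0.
    have Hu : \sum_(x <- labels n m) c x *: v x = \sum_(x <- labels n m) c' x *: v x.
      by apply: eq_big_seq => x xL; rewrite /c' xL.
    rewrite Hu in Hc *.
    set lam := bform (v VX) (\sum_(x <- labels n m) c' x *: v x).
    pose d x := c' x - lam * hh n m k x.
    have cld : cleaned n m d.
      by move=> x xL; rewrite /d /c' (negbTE xL) (@hh_cl n m k x xL) mulr0 subrr.
    have Hd : forall y, y \in labels n m -> grow n m (k + n%:R) d y = 0.
      move=> y yL; rewrite /d grow_lin Hrow // -(@bform_grow _ _ _ _ _ _ Hv yL).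
      case: eqP => [->|ne].
        by rewrite mulr1 subrr.
      have := Hc y yL (introN eqP ne); rewrite /commutes_with_screening /screening_residue_coef.
      by move=> /eqP; rewrite oppr_eq0 => /eqP ->; rewrite mulr0 subrr.
    have d0 := @nondeg n m _ d Hn Hm HK cld Hd.
    exists lam; rewrite HH scaler_sumr; apply: eq_bigr => x _.
    rewrite scalerA; congr (_ *: _).
    by apply/eqP; rewrite -subr_eq0; apply/eqP; exact: d0.
  + move=> [a Ha] x xL xX.
    rewrite /commutes_with_screening /screening_residue_coef Ha bformZr Hb //.
    by rewrite ifN // mulr0 oppr0.
- exact: Hope.
Qed.
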